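(* Every free completely simple semigroup $S=F_{css}(X)$ of finite rank $n\ge 2$ is an equational domain in the language $\mathcal{L}_S$.
   Context: Completely simple semigroups are considered as algebras in the language $\{\cdot,{}^{-1}\}$, where they form a variety (defined by $xx^{-1}x=x$, $xx^{-1}=x^{-1}x$, $(x^{-1})^{-1}=x$, $(xyx)^{-1}(xyx)=x^{-1}x$ together with associativity); $F_{css}(X)$ is the free algebra of this variety on the set $X$, $|X|=n$. The language $\mathcal{L}_S$ is $\{\cdot,{}^{-1}\}$ plus a constant for each element of $S$. An equation is an equality of two $\mathcal{L}_S$-terms; an algebraic set is the solution set in $S^m$ of a system of equations; $S$ is an equational domain if every finite union of algebraic sets is algebraic. *)

(* Defs.v *)
From mathcomp Require Import all_boot.
Set Implicit Arguments. Unset Strict Implicit. Unset Printing Implicit Defensive.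

Inductive css_term (V : Type) : Type :=
  | Var of V
  | Mul of css_term V & css_term V
  | Inv of css_term V.
Arguments Var {V}. Arguments Mul {V}. Arguments Inv {V}.

(* Terms modulo this
   relation form the free algebra F_css(V). *)
Inductive css_eq {V : Type} : css_term V -> css_term V -> Prop :=
  | css_refl t : css_eq t t
  | css_sym s t : css_eq s t -> css_eq t s
  | css_trans s t u : css_eq s t -> css_eq t u -> css_eq s u
  | css_cong_mul s s' t t' : css_eq s s' -> css_eq t t' -> css_eq (Mul s t) (Mul s' t')
  | css_cong_inv s s' : css_eq s s' -> css_eq (Inv s) (Inv s')
  | css_assoc x y z : css_eq (Mul (Mul x y) z) (Mul x (Mul y z))
  | css_ax1 x : css_eq (Mul (Mul x (Inv x)) x) x
  | css_ax2 x : css_eq (Mul x (Inv x)) (Mul (Inv x) x)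
  | css_ax3 x : css_eq (Inv (Inv x)) x
  | css_ax4 x y : css_eq (Mul (Inv (Mul (Mul x y) x)) (Mul (Mul x y) x)) (Mul (Inv x) x).

(* Elements of the free completely simple semigroup F_css(X), |X| = n,
   are represented by terms over 'I_n; equality in F_css is css_eq. *)
Definition Fcss (n : nat) := css_term 'I_n.

Fixpoint css_subst {V W : Type} (f : V -> css_term W) (t : css_term V) : css_term W :=
  match t with
  | Var v => f v
  | Mul a b => Mul (css_subst f a) (css_subst f b)
  | Inv a => Inv (css_subst f a)
  end.

(* L_S-terms in m variables, S = F_css(X): variables inl i (i < m) and a
   constant inr c for each element c of S. *)
Definition LS_term (n m : nat) := css_term ('I_m + Fcss n).

Definition equation (n m : nat) := (LS_term n m * LS_term n m)%type.
Definition system (n m : nat) := equation n m -> Prop.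

Definition LS_eval (n m : nat) (p : 'I_m -> Fcss n) (t : LS_term n m) : Fcss n :=
  css_subst (fun v => match v with inl i => p i | inr c => c end) t.

Definition solution (n m : nat) (E : system n m) (p : 'I_m -> Fcss n) : Prop :=
  forall e, E e -> css_eq (LS_eval p e.1) (LS_eval p e.2).

Definition algebraic (n m : nat) (A : ('I_m -> Fcss n) -> Prop) : Prop :=
  exists E : system n m, forall p, A p <-> solution E p.

Definition equational_domain (n : nat) : Prop :=
  forall (m k : nat) (Es : 'I_k -> system n m),
    algebraic (fun p => exists j : 'I_k, solution (Es j) p).

(* Main.v *)
Require Import Defs.
From mathcomp Require Import all_boot.
From Stdlib Require Import ClassicalEpsilon FunctionalExtensionality PropExtensionality ProofIrrelevance Classical.
Set Implicit Arguments. Unset Strict Implicit. Unset Printing Implicit Defensive.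

Record CSS := mkCSS {
  car :> Type;
  cm : car -> car -> car;
  ci : car -> car;
  cmA : forall x y z, cm (cm x y) z = cm x (cm y z);
  cax1 : forall x, cm (cm x (ci x)) x = x;
  cax2 : forall x, cm x (ci x) = cm (ci x) x;
  cax3 : forall x, ci (ci x) = x;
  cax4 : forall x y, cm (ci (cm (cm x y) x)) (cm (cm x y) x) = cm (ci x) x }.
Arguments cm {c}. Arguments ci {c}.
Local Notation "x ** y" := (cm x y) (at level 40, left associativity).

Fixpoint eval (S : CSS) (V : Type) (v : V -> S) (t : css_term V) : S :=
  match t with
  | Var x => v x
  | Mul a b => eval v a ** eval v b
  | Inv a => ci (eval v a)
  end.

Lemma sound (S : CSS) (V : Type) (v : V -> S) (s t : css_term V) :
  css_eq s t -> eval v s = eval v t.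
Proof.
induction 1; simpl; try congruence.
- by rewrite cmA.
- by rewrite cax1.
- by rewrite cax2.
- by rewrite cax3.
- by rewrite cax4.
Qed.

Lemma Linv (S : CSS) (x : S) : ci x ** x ** ci x = ci x.
Proof. by have := cax1 (ci x); rewrite cax3. Qed.

Lemma x_e (S : CSS) (x : S) : x ** (x ** ci x) = x.
Proof. by rewrite cax2 -cmA cax1. Qed.

Lemma ee (S : CSS) (x : S) : (x ** ci x) ** (x ** ci x) = x ** ci x.
Proof. by rewrite -cmA cax1. Qed.

Lemma e_inv (S : CSS) (x : S) : ci (x ** ci x) = x ** ci x.
Proof.
set e := x ** ci x.
have he : e ** e = e by exact: ee.
have E1 : ci e = e ** ci e.
  rewrite -{1}(Linv e) -{2}he.
  have -> : ci e ** (e ** e) ** ci e = (ci e ** e) ** (e ** ci e) by rewrite !cmA.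
  by rewrite -cax2 -cmA cax1.
rewrite {2}(_ : e = e ** ci e ** e); last by rewrite cax1.
by rewrite -E1 -cax2 -E1.
Qed.

Lemma H_inv_l (S : CSS) (e h : S) : e ** e = e -> ci e = e ->
  e ** h = h -> h ** e = h -> ci h ** h = e.
Proof. move=> he hei hl hr; have := cax4 e h; by rewrite hl hr hei he. Qed.

Lemma H_inv_r (S : CSS) (e h : S) : e ** e = e -> ci e = e ->
  e ** h = h -> h ** e = h -> h ** ci h = e.
Proof. move=> *; rewrite cax2; exact: H_inv_l. Qed.

Lemma H_invl (S : CSS) (e h : S) : e ** e = e -> ci e = e ->
  e ** h = h -> h ** e = h -> e ** ci h = ci h.
Proof. move=> he hei hl hr; by rewrite -{2}(Linv h) (H_inv_l he hei hl hr). Qed.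

Lemma H_invr (S : CSS) (e h : S) : e ** e = e -> ci e = e ->
  e ** h = h -> h ** e = h -> ci h ** e = ci h.
Proof. move=> he hei hl hr; by rewrite -{2}(Linv h) cmA (H_inv_r he hei hl hr). Qed.

Lemma cax1R (S : CSS) (x : S) : x ** (ci x ** x) = x.
Proof. by rewrite -cmA cax1. Qed.
Lemma cax1R' (S : CSS) (x y : S) : x ** (ci x ** (x ** y)) = x ** y.
Proof. by rewrite -!cmA cax1. Qed.
Lemma LinvR (S : CSS) (x : S) : ci x ** (x ** ci x) = ci x.
Proof. by rewrite -cmA Linv. Qed.
Lemma LinvR' (S : CSS) (x y : S) : ci x ** (x ** (ci x ** y)) = ci x ** y.
Proof. by rewrite -!cmA Linv. Qed.

Lemma inv_uniq (S : CSS) (z w : S) :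
  z ** w ** z = z -> w ** z ** w = w -> z ** w = w ** z -> w = ci z.
Proof.
move=> h1 h2 h3.
have ef : (w ** z) ** (ci z ** z) = w ** z by rewrite !cmA cax1R.
have ff : (z ** w) ** (z ** ci z) = z ** ci z by rewrite -cmA h1.
have fe : z ** ci z = z ** w by rewrite -ff h3 cax2 ef.
have : w = w ** (z ** w) by rewrite -cmA h2.
rewrite -fe -cmA -h3 -fe cax2 Linv => -> //.
Qed.

Lemma H_absorb (S : CSS) (e x : S) : e ** e = e ->
  e ** (e ** x ** e) = e ** x ** e /\ (e ** x ** e) ** e = e ** x ** e.
Proof. by move=> he; rewrite !cmA -(cmA e e) he. Qed.

Lemma xeux (S : CSS) (e x : S) : e ** e = e -> ci e = e ->
  x ** e ** ci (e ** x ** e) ** e ** x = x.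
Proof.
move=> he hei.
have [hl hr] := H_absorb x he.
set u := e ** x ** e in hl hr *.
have uu' := H_inv_r he hei hl hr.
have u'u := H_inv_l he hei hl hr.
set rest := e ** ci u ** e ** x.
have -> : x ** e ** ci u ** e ** x = x ** rest by rewrite /rest !cmA.
have A : x ** e ** (x ** rest) = x ** e ** x.
  rewrite /rest !cmA -(cmA e x) -(cmA _ e) -/u -(cmA u) uu' -(cmA e e) he.
  by rewrite -!cmA.
have C : x = x ** ci (x ** e ** x) ** (x ** e ** x).
  by rewrite cmA cax4 cax1R.
set v := x ** e ** x in A C.
have D : x = (x ** ci v ** x ** e) ** (x ** rest).
  have -> : (x ** ci v ** x ** e) ** (x ** rest) = (x ** ci v) ** (x ** e ** (x ** rest)) by rewrite !cmA.
  by rewrite A -C.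
rewrite [RHS]D.
have -> : (x ** ci v ** x ** e) ** (x ** rest) = (x ** ci v ** (x ** e ** x)) ** rest by rewrite !cmA.
by rewrite -C.
Qed.

Record Grp := mkGrp {
  gcar :> Type;
  gm : gcar -> gcar -> gcar;
  gi : gcar -> gcar;
  g1 : gcar;
  gA : forall x y z, gm (gm x y) z = gm x (gm y z);
  g1m : forall x, gm g1 x = x;
  gm1 : forall x, gm x g1 = x;
  gVm : forall x, gm (gi x) x = g1;
  gmV : forall x, gm x (gi x) = g1 }.
Arguments gm {g}. Arguments gi {g}. Arguments g1 {g}.
Local Notation "x *g y" := (gm x y) (at level 40, left associativity).

Lemma gKV (G : Grp) (x y : G) : x *g (gi x *g y) = y.
Proof. by rewrite -gA gmV g1m. Qed.
Lemma gVK (G : Grp) (x y : G) : gi x *g (x *g y) = y.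
Proof. by rewrite -gA gVm g1m. Qed.
Lemma gcanl (G : Grp) (x y z : G) : x *g y = x *g z -> y = z.
Proof. by move=> h; rewrite -(gVK x y) h gVK. Qed.
Lemma gcanr (G : Grp) (x y z : G) : y *g x = z *g x -> y = z.
Proof. by move=> h; rewrite -(gm1 y) -(gmV x) -gA h gA gmV gm1. Qed.
Lemma ginvK (G : Grp) (x : G) : gi (gi x) = x.
Proof. by apply: (@gcanl _ (gi x)); rewrite gmV gVm. Qed.
Lemma ginvM (G : Grp) (x y : G) : gi (x *g y) = gi y *g gi x.
Proof. by apply: (@gcanl _ (x *g y)); rewrite gmV gA gKV gmV. Qed.
Lemma ginv1 (G : Grp) : gi (g1 : G) = g1.
Proof. by apply: (@gcanl _ g1); rewrite gmV g1m. Qed.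

Inductive rees (G : Grp) (N : nat) := Rt of 'I_N & G & 'I_N.

Definition rmul (G : Grp) N (P : 'I_N -> 'I_N -> G) (x y : rees G N) :=
  let: Rt i a l := x in let: Rt j b m := y in Rt i (a *g P l j *g b) m.
Definition rinv (G : Grp) N (P : 'I_N -> 'I_N -> G) (x : rees G N) :=
  let: Rt i a l := x in Rt i (gi (P l i) *g gi a *g gi (P l i)) l.

Lemma rmulA (G : Grp) N (P : 'I_N -> 'I_N -> G) x y z :
  rmul P (rmul P x y) z = rmul P x (rmul P y z).
Proof. by case: x => ???; case: y => ???; case: z => ???; rewrite /= !gA. Qed.

Lemma rmulV (G : Grp) N (P : 'I_N -> 'I_N -> G) i a l :
  rmul P (Rt i a l) (rinv P (Rt i a l)) = Rt i (gi (P l i)) l.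
Proof. by rewrite /= !gA gKV gKV. Qed.
Lemma rVmul (G : Grp) N (P : 'I_N -> 'I_N -> G) i a l :
  rmul P (rinv P (Rt i a l)) (Rt i a l) = Rt i (gi (P l i)) l.
Proof. by rewrite /= !gA gVK gVm gm1. Qed.

Lemma rax1 (G : Grp) N (P : 'I_N -> 'I_N -> G) x :
  rmul P (rmul P x (rinv P x)) x = x.
Proof. by case: x => i a l; rewrite rmulV /= gA gVK. Qed.
Lemma rax2 (G : Grp) N (P : 'I_N -> 'I_N -> G) x :
  rmul P x (rinv P x) = rmul P (rinv P x) x.
Proof. by case: x => i a l; rewrite rmulV rVmul. Qed.
Lemma rax3 (G : Grp) N (P : 'I_N -> 'I_N -> G) x :
  rinv P (rinv P x) = x.
Proof. by case: x => i a l; rewrite /= !ginvM !ginvK !gA gVK gmV gm1. Qed.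
Lemma rax4 (G : Grp) N (P : 'I_N -> 'I_N -> G) x y :
  rmul P (rinv P (rmul P (rmul P x y) x)) (rmul P (rmul P x y) x) = rmul P (rinv P x) x.
Proof.
case: x => i a l; case: y => j b m.
by rewrite [rmul P (Rt i a l) _]/= [rmul P (Rt i _ m) _]/= !rVmul.
Qed.

Definition ReesCSS (G : Grp) N (P : 'I_N -> 'I_N -> G) : CSS :=
  mkCSS (@rmulA G N P) (@rax1 G N P) (@rax2 G N P) (@rax3 G N P) (@rax4 G N P).

Definition flipl (T : eqType) (a : T * bool) : T * bool := (a.1, ~~ a.2).
Lemma flipK (T : eqType) (a : T * bool) : flipl (flipl a) = a.
Proof. by case: a => x b; rewrite /flipl /= negbK. Qed.
Lemma flip_neq (T : eqType) (a : T * bool) : (flipl a == a) = false.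
Proof. by case: a => x b; rewrite /flipl /= xpair_eqE eqxx /=; case: b. Qed.

Definition push (T : eqType) (a : T * bool) (s : seq (T * bool)) :=
  if s is b :: s' then (if b == flipl a then s' else a :: s) else [:: a].

Fixpoint reduced (T : eqType) (s : seq (T * bool)) : bool :=
  if s is a :: s' then
    reduced s' && (if s' is b :: _ then b != flipl a else true)
  else true.

Definition act (T : eqType) (u s : seq (T * bool)) := foldr (@push T) s u.

Lemma push_red (T : eqType) a (s : seq (T * bool)) : reduced s -> reduced (push a s).
Proof.
case: s => [|b s] //= /andP [hs hb].
case: ifP => [_|/negbT hba] //=; by rewrite hs hb hba.
Qed.

Lemma push_cancel (T : eqType) a (s : seq (T * bool)) :
  reduced s -> push (flipl a) (push a s) = s.
Proof.
case: s => [|b s] /=; first by rewrite flipK eqxx.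
move=> /andP [hs hb]; case: ifP => [/eqP hba|hba] /=.
- case: s hs hb => [|c s] /=; first by rewrite hba.
  by move=> _; rewrite hba !flipK => /negbTE ->.
- by rewrite flipK; case: eqP.
Qed.

Lemma act_red (T : eqType) (u s : seq (T * bool)) : reduced s -> reduced (act u s).
Proof. by move=> hs; elim: u => //= a u IH; apply: push_red. Qed.

Lemma act_cat (T : eqType) (u v s : seq (T * bool)) : act (u ++ v) s = act u (act v s).
Proof. by rewrite /act foldr_cat. Qed.

Lemma act_push (T : eqType) a (s t : seq (T * bool)) : reduced t ->
  act (push a s) t = act (a :: s) t.
Proof.
move=> ht; case: s => [|b s] //=; case: ifP => [/eqP ->|] //=.
rewrite -{1}(flipK a) push_cancel //; exact: act_red.
Qed.

Lemma act_act (T : eqType) (u s t : seq (T * bool)) : reduced t ->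
  act (act u s) t = act u (act s t).
Proof. by move=> ht; elim: u => //= a u IH; rewrite act_push //= IH. Qed.

Lemma act_nil_red (T : eqType) (s : seq (T * bool)) : reduced s -> act s [::] = s.
Proof.
elim: s => //= a s IH /andP [hs hb]; rewrite IH //.
by case: s hs hb {IH} => //= b s _ /negbTE ->.
Qed.

Definition rinvw (T : eqType) (s : seq (T * bool)) := rev (map (@flipl T) s).

Lemma act_rinv (T : eqType) (s t : seq (T * bool)) : reduced t ->
  act (rinvw s) (act s t) = t.
Proof.
move=> ht; elim: s => //= a s IH.
rewrite /rinvw map_cons rev_cons -cats1 act_cat /= push_cancel ?IH //.
exact: act_red.
Qed.

Lemma rinvwK (T : eqType) (s : seq (T * bool)) : rinvw (rinvw s) = s.
Proof. rewrite /rinvw -map_rev revK -map_comp map_id_in // => x _ /=; by rewrite flipK. Qed.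

Definition fg (T : eqType) := {s : seq (T * bool) | reduced s}.

Definition fgm (T : eqType) (x y : fg T) : fg T :=
  exist _ (act (val x) (val y)) (act_red (val x) (valP y)).
Definition fg1 (T : eqType) : fg T := exist _ [::] isT.
Definition fgi (T : eqType) (x : fg T) : fg T :=
  exist _ (act (rinvw (val x)) [::]) (act_red _ (isT : reduced [::])).

Lemma fgA (T : eqType) (x y z : fg T) : fgm (fgm x y) z = fgm x (fgm y z).
Proof. apply: val_inj; rewrite /= act_act //; exact: valP. Qed.
Lemma fg1m (T : eqType) (x : fg T) : fgm (fg1 T) x = x.
Proof. by apply: val_inj. Qed.
Lemma fgm1 (T : eqType) (x : fg T) : fgm x (fg1 T) = x.
Proof. apply: val_inj; rewrite /= act_nil_red //; exact: valP. Qed.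
Lemma fgVm (T : eqType) (x : fg T) : fgm (fgi x) x = fg1 T.
Proof.
apply: val_inj => /=; rewrite act_act //.
have -> : act [::] (val x) = act (val x) [::] by rewrite act_nil_red //; exact: valP.
by rewrite act_rinv.
exact: valP.
Qed.
Lemma fgmV (T : eqType) (x : fg T) : fgm x (fgi x) = fg1 T.
Proof.
apply: val_inj => /=; rewrite -[X in act X _](rinvwK (val x)) act_rinv //.
Qed.

Definition FG (T : eqType) : Grp := mkGrp (@fgA T) (@fg1m T) (@fgm1 T) (@fgVm T) (@fgmV T).

Lemma act_cat_red (T : eqType) (x y : seq (T * bool)) : reduced (x ++ y) -> act x y = x ++ y.
Proof.
elim: x => //= a x IH /andP [h hb]; rewrite IH //.
by case: (x ++ y) hb => //= b s; rewrite /push => /negbTE ->.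
Qed.

Lemma red_cat (T : eqType) (x y : seq (T * bool)) : reduced x -> reduced y ->
  (if y is b :: _ then (if x is a :: x' then b != flipl (last a x') else true) else true) ->
  reduced (x ++ y).
Proof.
elim: x => [|a x IH] //= /andP [hx ha] hy hj.
have hj' : is_true (if y is b :: _ then (if x is a0 :: x' then b != flipl (last a0 x') else true) else true).
  by case: x hj {IH hx ha} => [|a0 x] //; case: y {hy}.
rewrite (IH hx hy hj') /=.
case: x hj {IH hx hj'} ha => [|a0 x] //= hj ha; by case: y {hy} hj.
Qed.

Lemma noncomm (T : eqType) (xi eta : fg T) (c d : T * bool) :
  val xi != [::] -> val eta != [::] ->
  c != head d (val xi) -> c != flipl (last d (val xi)) ->
  c != flipl (head d (val eta)) -> c != last d (val eta) ->
  let z := fgm (fgm (exist _ [:: c] isT) eta) (exist _ [:: flipl c] isT) in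
  fgm xi z <> fgm z xi.
Proof.
case: xi => [[|x0 xs] hx] //=; case: eta => [[|y0 ys] hy] //= _ _ h1 h2 h3 h4.
have flip_eq : forall a b : T * bool, (a == flipl b) = (b == flipl a).
  move=> a b; apply/eqP/eqP => ->; by rewrite flipK.
have hcy : reduced (c :: y0 :: ys).
  by change (reduced (y0 :: ys) && (y0 != flipl c)); rewrite hy /= flip_eq.
have hz : reduced (c :: y0 :: ys ++ [:: flipl c]).
  apply: (@red_cat T (c :: y0 :: ys) [:: flipl c]) => //.
  by rewrite /= (inj_eq (can_inj (@flipK T))).
move=> /(congr1 val).
change (act (x0 :: xs) (act (act [:: c] (y0 :: ys)) [:: flipl c]) = act (act (act [:: c] (y0 :: ys)) [:: flipl c]) (x0 :: xs) -> False).
have -> : act (act [:: c] (y0 :: ys)) [:: flipl c] = c :: y0 :: ys ++ [:: flipl c].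
  by rewrite act_act // -act_cat act_cat_red.
have -> : act (x0 :: xs) (c :: y0 :: ys ++ [:: flipl c]) = (x0 :: xs) ++ (c :: y0 :: ys ++ [:: flipl c]).
  by rewrite act_cat_red //; apply: red_cat.
have -> : act (c :: y0 :: ys ++ [:: flipl c]) (x0 :: xs) = (c :: y0 :: ys ++ [:: flipl c]) ++ (x0 :: xs).
  rewrite act_cat_red //; apply: red_cat => //=.
  by rewrite cats1 last_rcons flipK eq_sym.
by case=> e; move: h1; rewrite e eqxx.
Qed.

Definition Qt (V : Type) := {P : css_term V -> Prop | exists t, P = css_eq t}.
Definition cls (V : Type) (t : css_term V) : Qt V := exist _ (css_eq t) (ex_intro _ t erefl).
Definition rep (V : Type) (q : Qt V) : css_term V :=
  proj1_sig (constructive_indefinite_description _ (proj2_sig q)).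

Lemma cls_rep (V : Type) (q : Qt V) : cls (rep q) = q.
Proof.
rewrite /rep; case: q => P h /=.
case: (constructive_indefinite_description _ h) => t ht /=.
subst P; rewrite /cls; f_equal; apply: proof_irrelevance.
Qed.

Lemma exist_eq (V : Type) (P Q : css_term V -> Prop) h1 h2 :
  P = Q -> exist (fun P => exists t, P = css_eq t) P h1 = exist _ Q h2.
Proof. move=> E; subst Q; f_equal; apply: proof_irrelevance. Qed.

Lemma cls_eq (V : Type) (s t : css_term V) : cls s = cls t <-> css_eq s t.
Proof.
split.
- move=> h; have : css_eq s = css_eq t by move: h; rewrite /cls => [[]].
  move=> h2; have : css_eq t t by apply: css_refl.
  by rewrite -h2.
- move=> h; rewrite /cls.
  have E : css_eq s = css_eq t.
    apply: functional_extensionality => u; apply: propositional_extensionality.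
    split=> hu; [apply: css_trans (css_sym h) hu | apply: css_trans h hu].
  exact: exist_eq.
Qed.

Lemma rep_cls (V : Type) (t : css_term V) : css_eq (rep (cls t)) t.
Proof. by apply/cls_eq; rewrite cls_rep. Qed.

Definition qm (V : Type) (a b : Qt V) := cls (Mul (rep a) (rep b)).
Definition qi (V : Type) (a : Qt V) := cls (Inv (rep a)).

Lemma qm_cls (V : Type) (s t : css_term V) : qm (cls s) (cls t) = cls (Mul s t).
Proof. apply/cls_eq; apply: css_cong_mul; exact: rep_cls. Qed.
Lemma qi_cls (V : Type) (s : css_term V) : qi (cls s) = cls (Inv s).
Proof. apply/cls_eq; apply: css_cong_inv; exact: rep_cls. Qed.

Lemma qmA (V : Type) (x y z : Qt V) : qm (qm x y) z = qm x (qm y z).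
Proof.
rewrite -(cls_rep x) -(cls_rep y) -(cls_rep z) !qm_cls.
apply/cls_eq; exact: css_assoc.
Qed.
Lemma qax1 (V : Type) (x : Qt V) : qm (qm x (qi x)) x = x.
Proof. rewrite -(cls_rep x) qi_cls !qm_cls; apply/cls_eq; exact: css_ax1. Qed.
Lemma qax2 (V : Type) (x : Qt V) : qm x (qi x) = qm (qi x) x.
Proof. rewrite -(cls_rep x) qi_cls !qm_cls; apply/cls_eq; exact: css_ax2. Qed.
Lemma qax3 (V : Type) (x : Qt V) : qi (qi x) = x.
Proof. rewrite -(cls_rep x) !qi_cls; apply/cls_eq; exact: css_ax3. Qed.
Lemma qax4 (V : Type) (x y : Qt V) : qm (qi (qm (qm x y) x)) (qm (qm x y) x) = qm (qi x) x.
Proof.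
rewrite -(cls_rep x) -(cls_rep y) !(qm_cls, qi_cls); apply/cls_eq; exact: css_ax4.
Qed.

Definition QCSS (V : Type) : CSS := mkCSS (@qmA V) (@qax1 V) (@qax2 V) (@qax3 V) (@qax4 V).

Lemma eval_cls (V : Type) (t : css_term V) : eval (S := QCSS V) (fun v => cls (Var v)) t = cls t.
Proof.
elim: t => //= [a IHa b IHb | a IHa].
- by rewrite IHa IHb; exact: qm_cls.
- by rewrite IHa; exact: qi_cls.
Qed.

Notation gen N := ('I_N + 'I_N * 'I_N)%type.
Definition FGN (N : nat) := FG (gen N).
Definition sing (T : eqType) (a : T * bool) : fg T := exist _ [:: a] isT.

Definition o1 (nn : nat) : 'I_nn.+2 := @Ordinal nn.+2 1 isT.

Definition Pm (nn : nat) (l i : 'I_nn.+2) : FGN nn.+2 :=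
  if (l == ord0) || (i == ord0) then (g1 : FGN nn.+2) else (sing (inr (l, i), true) : FGN nn.+2).

Definition Mod (nn : nat) : CSS := ReesCSS (@Pm nn).
Definition Xg (nn : nat) (i : 'I_nn.+2) : Mod nn :=
  Rt i (sing (inl i, true) : FGN nn.+2) i.
Definition interp (nn : nat) (t : css_term 'I_nn.+2) : Mod nn := eval (@Xg nn) t.

Definition ce (nn : nat) (S : CSS) (xs : 'I_nn.+2 -> S) := xs ord0 ** ci (xs ord0).
Definition cu (nn : nat) (S : CSS) (xs : 'I_nn.+2 -> S) i := ce xs ** xs i ** ce xs.
Definition cD (nn : nat) (S : CSS) (xs : 'I_nn.+2 -> S) i := xs i ** ce xs ** ci (cu xs i).
Definition cC (nn : nat) (S : CSS) (xs : 'I_nn.+2 -> S) l := ci (cu xs l) ** ce xs ** xs l.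

Definition hpart (nn : nat) (S : CSS) (xs : 'I_nn.+2 -> S) (g : gen nn.+2) : S :=
  match g with inl i => cu xs i | inr (l, i) => cC xs l ** cD xs i end.
Definition psil (nn : nat) (S : CSS) (xs : 'I_nn.+2 -> S) (a : gen nn.+2 * bool) : S :=
  if a.2 then hpart xs a.1 else ci (hpart xs a.1).
Definition psi (nn : nat) (S : CSS) (xs : 'I_nn.+2 -> S) (w : seq (gen nn.+2 * bool)) : S :=
  foldr (fun a acc => psil xs a ** acc) (ce xs) w.
Definition phi (nn : nat) (S : CSS) (xs : 'I_nn.+2 -> S) (m : Mod nn) : S :=
  let: Rt i g l := m in cD xs i ** psi xs (val g) ** cC xs l.

Notation Hc e h := (e ** h = h /\ h ** e = h).

Lemma ce_idem nn (S : CSS) (xs : 'I_nn.+2 -> S) : ce xs ** ce xs = ce xs.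
Proof. exact: ee. Qed.
Lemma ce_inv nn (S : CSS) (xs : 'I_nn.+2 -> S) : ci (ce xs) = ce xs.
Proof. exact: e_inv. Qed.

Lemma Hc_e nn (S : CSS) (xs : 'I_nn.+2 -> S) : Hc (ce xs) (ce xs).
Proof. by split; rewrite ce_idem. Qed.
Lemma Hc_mul nn (S : CSS) (xs : 'I_nn.+2 -> S) h k :
  Hc (ce xs) h -> Hc (ce xs) k -> Hc (ce xs) (h ** k).
Proof. by move=> [h1 h2] [k1 k2]; split; [rewrite -cmA h1 | rewrite cmA k2]. Qed.
Lemma Hc_inv nn (S : CSS) (xs : 'I_nn.+2 -> S) h :
  Hc (ce xs) h -> Hc (ce xs) (ci h).
Proof.
move=> [h1 h2]; split; [exact: H_invl (ce_idem xs) (ce_inv xs) h1 h2|exact: H_invr (ce_idem xs) (ce_inv xs) h1 h2].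
Qed.
Lemma Hc_Vr nn (S : CSS) (xs : 'I_nn.+2 -> S) h : Hc (ce xs) h -> h ** ci h = ce xs.
Proof. move=> [h1 h2]; exact: H_inv_r (ce_idem xs) (ce_inv xs) h1 h2. Qed.
Lemma Hc_Vl nn (S : CSS) (xs : 'I_nn.+2 -> S) h : Hc (ce xs) h -> ci h ** h = ce xs.
Proof. move=> [h1 h2]; exact: H_inv_l (ce_idem xs) (ce_inv xs) h1 h2. Qed.

Lemma Hc_u nn (S : CSS) (xs : 'I_nn.+2 -> S) i : Hc (ce xs) (cu xs i).
Proof. exact: H_absorb (ce_idem xs). Qed.

Lemma Cl_e nn (S : CSS) (xs : 'I_nn.+2 -> S) l : ce xs ** cC xs l = cC xs l.
Proof. by rewrite /cC -!cmA (proj1 (Hc_inv (Hc_u xs l))). Qed.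
Lemma Dr_e nn (S : CSS) (xs : 'I_nn.+2 -> S) i : cD xs i ** ce xs = cD xs i.
Proof. by rewrite /cD cmA (proj2 (Hc_inv (Hc_u xs i))). Qed.

Lemma Hc_CD nn (S : CSS) (xs : 'I_nn.+2 -> S) l i : Hc (ce xs) (cC xs l ** cD xs i).
Proof. by split; [rewrite -cmA Cl_e | rewrite cmA Dr_e]. Qed.

Lemma Hc_hpart nn (S : CSS) (xs : 'I_nn.+2 -> S) g : Hc (ce xs) (hpart xs g).
Proof. case: g => [i|[l i]] /=; [exact: Hc_u | exact: Hc_CD]. Qed.
Lemma Hc_psil nn (S : CSS) (xs : 'I_nn.+2 -> S) a : Hc (ce xs) (psil xs a).
Proof. case: a => g [] /=; rewrite /psil /=; [exact: Hc_hpart | apply: Hc_inv; exact: Hc_hpart]. Qed.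
Lemma Hc_psi nn (S : CSS) (xs : 'I_nn.+2 -> S) w : Hc (ce xs) (psi xs w).
Proof. elim: w => [|a w IH] /=; [exact: Hc_e | apply: Hc_mul => //; exact: Hc_psil]. Qed.

Lemma psil_flip nn (S : CSS) (xs : 'I_nn.+2 -> S) a : psil xs a ** psil xs (flipl a) = ce xs.
Proof.
case: a => g [] /=; rewrite /psil /flipl /=.
- exact: Hc_Vr (Hc_hpart xs g).
- exact: Hc_Vl (Hc_hpart xs g).
Qed.

Lemma psi_push nn (S : CSS) (xs : 'I_nn.+2 -> S) a s :
  psi xs (push a s) = psil xs a ** psi xs s.
Proof.
case: s => [|b s] //=; case: ifP => [/eqP ->|] //=.
by rewrite -cmA psil_flip (proj1 (Hc_psi xs s)).
Qed.

Lemma psi_act nn (S : CSS) (xs : 'I_nn.+2 -> S) u s :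
  psi xs (act u s) = psi xs u ** psi xs s.
Proof.
elim: u => [|a u IH] /=; first by rewrite (proj1 (Hc_psi xs s)).
by rewrite psi_push IH cmA.
Qed.

Lemma cu0 nn (S : CSS) (xs : 'I_nn.+2 -> S) : cu xs ord0 = xs ord0.
Proof. by rewrite /cu /ce cax1 x_e. Qed.
Lemma C0 nn (S : CSS) (xs : 'I_nn.+2 -> S) : cC xs ord0 = ce xs.
Proof. by rewrite /cC cu0 /ce LinvR cax2. Qed.
Lemma D0 nn (S : CSS) (xs : 'I_nn.+2 -> S) : cD xs ord0 = ce xs.
Proof. by rewrite /cD cu0 /ce x_e. Qed.

Lemma psi_P nn (S : CSS) (xs : 'I_nn.+2 -> S) l i :
  psi xs (val (Pm l i)) = cC xs l ** cD xs i.
Proof.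
rewrite /Pm; case: ifP => [|_] /=; first case/orP => /eqP ->.
- rewrite C0 /cD.
  have -> : ce xs ** (xs i ** ce xs ** ci (cu xs i)) = cu xs i ** ci (cu xs i) by rewrite /cu !cmA.
  by rewrite (Hc_Vr (Hc_u xs i)).
- rewrite D0.
  have -> : cC xs l ** ce xs = ci (cu xs l) ** cu xs l by rewrite /cC /cu !cmA.
  by rewrite (Hc_Vl (Hc_u xs l)).
- by rewrite /psil /= (proj2 (Hc_CD xs l i)).
Qed.

Lemma phi_mul nn (S : CSS) (xs : 'I_nn.+2 -> S) (x y : Mod nn) :
  phi xs (x ** y) = phi xs x ** phi xs y.
Proof.
case: x => i a l; case: y => j b m /=.
rewrite psi_act psi_act psi_P !cmA //.
Qed.

Lemma phi_X nn (S : CSS) (xs : 'I_nn.+2 -> S) i : phi xs (Xg i) = xs i.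
Proof.
rewrite /= (proj2 (Hc_u xs i)) /cD /cC.
have -> : xs i ** ce xs ** ci (cu xs i) ** cu xs i ** (ci (cu xs i) ** ce xs ** xs i)
  = xs i ** ce xs ** (ci (cu xs i) ** cu xs i ** ci (cu xs i)) ** ce xs ** xs i by rewrite !cmA.
rewrite Linv; apply: xeux; [exact: ce_idem | exact: ce_inv].
Qed.

Lemma phi_inv nn (S : CSS) (xs : 'I_nn.+2 -> S) (m : Mod nn) :
  phi xs (ci m) = ci (phi xs m).
Proof.
apply: inv_uniq; rewrite -!phi_mul; by [rewrite cax1 | rewrite Linv | rewrite cax2].
Qed.

Lemma phi_eval nn (S : CSS) (xs : 'I_nn.+2 -> S) t : phi xs (interp t) = eval xs t.
Proof.
elim: t => [v|a IHa b IHb|a IHa] /=.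
- exact: phi_X.
- by rewrite phi_mul IHa IHb.
- by rewrite phi_inv IHa.
Qed.

Lemma complete nn (s t : css_term 'I_nn.+2) : interp s = interp t -> css_eq s t.
Proof.
move=> h; apply/cls_eq.
rewrite -!(@eval_cls _ s) -(@eval_cls _ t) -!(phi_eval (S := QCSS 'I_nn.+2)) h //.
Qed.

Lemma soundM nn (s t : css_term 'I_nn.+2) : css_eq s t -> interp s = interp t.
Proof. exact: sound. Qed.

Definition eT nn : Fcss nn.+2 := Mul (Var ord0) (Inv (Var ord0)).
Definition uT nn (i : 'I_nn.+2) : Fcss nn.+2 := Mul (Mul (eT nn) (Var i)) (eT nn).
Definition DT nn (i : 'I_nn.+2) : Fcss nn.+2 := Mul (Mul (Var i) (eT nn)) (Inv (uT i)).
Definition CT nn (l : 'I_nn.+2) : Fcss nn.+2 := Mul (Mul (Inv (uT l)) (eT nn)) (Var l).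

Definition projT nn W (cst : Fcss nn.+2 -> css_term W) (k : nat) (x : css_term W) :=
  match k with
  | 0 => Mul (Mul (cst (eT nn)) x) (cst (eT nn))
  | 1 => Mul (Mul (cst (eT nn)) x) (cst (DT (o1 nn)))
  | _ => Mul (Mul (cst (CT (o1 nn))) x) (cst (eT nn))
  end.

Definition gadG nn W (cst : Fcss nn.+2 -> css_term W) (k l : nat) (Gt : Fcss nn.+2)
  (a b c d : css_term W) : css_term W * css_term W :=
  let X := Mul (projT cst k a) (Inv (projT cst k b)) in
  let Gc := Mul (Mul (cst (eT nn)) (cst Gt)) (cst (eT nn)) in
  let Z := Mul (Mul Gc (Mul (projT cst l c) (Inv (projT cst l d)))) (Inv Gc) in
  (Mul X Z, Mul Z X).

Definition projS nn (S : CSS) (xs : 'I_nn.+2 -> S) (k : nat) (x : S) : S :=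
  match k with
  | 0 => ce xs ** x ** ce xs
  | 1 => ce xs ** x ** cD xs (o1 nn)
  | _ => cC xs (o1 nn) ** x ** ce xs
  end.

Definition gadS nn (S : CSS) (xs : 'I_nn.+2 -> S) (k l : nat) (g a b c d : S) : S * S :=
  let X := projS xs k a ** ci (projS xs k b) in
  let Gc := ce xs ** g ** ce xs in
  let Z := Gc ** (projS xs l c ** ci (projS xs l d)) ** ci Gc in
  (X ** Z, Z ** X).

Lemma eval_gad nn (S : CSS) (xs : 'I_nn.+2 -> S) k l Gt a b c d :
  (eval xs (gadG (fun t => t) k l Gt a b c d).1, eval xs (gadG (fun t => t) k l Gt a b c d).2)
  = gadS xs k l (eval xs Gt) (eval xs a) (eval xs b) (eval xs c) (eval xs d).
Proof. by case: k => [|[|k]]; case: l => [|[|l]]. Qed.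

Lemma Hc_proj nn (S : CSS) (xs : 'I_nn.+2 -> S) k x : Hc (ce xs) (projS xs k x).
Proof.
case: k => [|[|k]] /=.
- exact: H_absorb (ce_idem xs).
- split; first by rewrite -(cmA (ce xs) (ce xs ** x) (cD xs (o1 nn))) -(cmA (ce xs) (ce xs) x) ce_idem.
  by rewrite (cmA (ce xs ** x) (cD xs (o1 nn)) (ce xs)) Dr_e.
- split; first by rewrite -(cmA (ce xs) (cC xs (o1 nn) ** x) (ce xs)) -(cmA (ce xs) (cC xs (o1 nn)) x) Cl_e.
  by rewrite (cmA (cC xs (o1 nn) ** x) (ce xs) (ce xs)) ce_idem.
Qed.

Lemma gad_left nn (S : CSS) (xs : 'I_nn.+2 -> S) k l g a c d :
  (gadS xs k l g a a c d).1 = (gadS xs k l g a a c d).2.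
Proof.
rewrite /= (Hc_Vr (Hc_proj xs k a)).
set Z := (X in ce xs ** X = X ** ce xs).
have HZ : Hc (ce xs) Z.
  apply: Hc_mul; first apply: Hc_mul.
  - exact: H_absorb (ce_idem xs).
  - apply: Hc_mul; [exact: Hc_proj | apply: Hc_inv; exact: Hc_proj].
  - apply: Hc_inv; exact: H_absorb (ce_idem xs).
by rewrite (proj1 HZ) (proj2 HZ).
Qed.

Lemma gad_right nn (S : CSS) (xs : 'I_nn.+2 -> S) k l g a b c :
  (gadS xs k l g a b c c).1 = (gadS xs k l g a b c c).2.
Proof.
rewrite /= (Hc_Vr (Hc_proj xs l c)).
have HG : Hc (ce xs) (ce xs ** g ** ce xs) by exact: H_absorb (ce_idem xs).
rewrite (proj2 HG) (Hc_Vr HG).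
set X := (X in X ** ce xs = ce xs ** X).
have HX : Hc (ce xs) X by apply: Hc_mul; [exact: Hc_proj | apply: Hc_inv; exact: Hc_proj].
by rewrite (proj1 HX) (proj2 HX).
Qed.

Lemma gadT_left nn k l Gt (a b c d : Fcss nn.+2) : css_eq a b ->
  css_eq (gadG (fun t => t) k l Gt a b c d).1 (gadG (fun t => t) k l Gt a b c d).2.
Proof.
move=> /soundM hab; apply: complete.
have := eval_gad (@Xg nn) k l Gt a b c d; rewrite -/(interp _) -/(interp _).
rewrite -/(interp a) -/(interp b) -/(interp c) -/(interp d) -/(interp Gt) hab.
case=> -> ->; exact: gad_left.
Qed.

Lemma gadT_right nn k l Gt (a b c d : Fcss nn.+2) : css_eq c d ->
  css_eq (gadG (fun t => t) k l Gt a b c d).1 (gadG (fun t => t) k l Gt a b c d).2.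
Proof.
move=> /soundM hcd; apply: complete.
have := eval_gad (@Xg nn) k l Gt a b c d; rewrite -/(interp _) -/(interp _).
rewrite -/(interp a) -/(interp b) -/(interp c) -/(interp d) -/(interp Gt) hcd.
case=> -> ->; exact: gad_right.
Qed.

Lemma P0i nn (i : 'I_nn.+2) : Pm ord0 i = g1.
Proof. by rewrite /Pm eqxx. Qed.
Lemma Pl0 nn (l : 'I_nn.+2) : Pm l ord0 = g1.
Proof. by rewrite /Pm eqxx orbT. Qed.

Lemma mulM nn (i l j m : 'I_nn.+2) a b :
  (Rt i a l : Mod nn) ** Rt j b m = Rt i (a *g Pm l j *g b) m.
Proof. by []. Qed.
Lemma invM nn (i l : 'I_nn.+2) a :
  ci (Rt i a l : Mod nn) = Rt i (gi (Pm l i) *g gi a *g gi (Pm l i)) l.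
Proof. by []. Qed.

Lemma H00mul nn (a b : FGN nn.+2) :
  (Rt ord0 a ord0 : Mod nn) ** Rt ord0 b ord0 = Rt ord0 (a *g b) ord0.
Proof. by rewrite mulM P0i gm1. Qed.
Lemma H00inv nn (a : FGN nn.+2) :
  ci (Rt ord0 a ord0 : Mod nn) = Rt ord0 (gi a) ord0.
Proof. by rewrite invM P0i ginv1 g1m gm1. Qed.

Lemma ceM nn : ce (@Xg nn) = Rt ord0 g1 ord0.
Proof. by rewrite /ce /Xg invM mulM P0i ginv1 !g1m !gm1 gmV. Qed.
Lemma cuM nn (i : 'I_nn.+2) : cu (@Xg nn) i = Rt ord0 (sing (inl i, true) : FGN nn.+2) ord0.
Proof. by rewrite /cu ceM /Xg !mulM P0i Pl0 !g1m !gm1. Qed.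
Lemma cDM nn (i : 'I_nn.+2) : cD (@Xg nn) i = Rt i g1 ord0.
Proof. by rewrite /cD cuM ceM H00inv /Xg !mulM Pl0 P0i !gm1 gmV. Qed.
Lemma cCM nn (l : 'I_nn.+2) : cC (@Xg nn) l = Rt ord0 g1 l.
Proof. by rewrite /cC cuM ceM H00inv /Xg !mulM P0i !gm1 gVm. Qed.

Definition pv nn (k : nat) (i : 'I_nn.+2) (a : FGN nn.+2) (l : 'I_nn.+2) : FGN nn.+2 :=
  match k with 0 => a | 1 => a *g Pm l (o1 nn) | _ => Pm (o1 nn) i *g a end.

Lemma projM nn k (i l : 'I_nn.+2) a :
  projS (@Xg nn) k (Rt i a l) = Rt ord0 (pv k i a l) ord0.
Proof.
case: k => [|[|k]]; cbn [projS pv]; rewrite ?ceM ?cDM ?cCM !mulM ?P0i ?Pl0 !g1m ?gm1 //.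
Qed.

Lemma o1_neq0 nn : (o1 nn == ord0) = false.
Proof. by []. Qed.

Lemma Pm_injl nn (l l' : 'I_nn.+2) : Pm l (o1 nn) = Pm l' (o1 nn) -> l = l'.
Proof.
rewrite /Pm o1_neq0 !orbF.
case: eqP => [->|hl]; case: eqP => [->|hl'] // /(congr1 val) //= [] //.
Qed.
Lemma Pm_injr nn (i i' : 'I_nn.+2) : Pm (o1 nn) i = Pm (o1 nn) i' -> i = i'.
Proof.
rewrite /Pm o1_neq0 /=.
case: eqP => [->|hl]; case: eqP => [->|hl'] // /(congr1 val) //= [] //.
Qed.

Lemma pv_inj nn (i j l m : 'I_nn.+2) a b :
  pv 0 i a l = pv 0 j b m -> pv 1 i a l = pv 1 j b m -> pv 2 i a l = pv 2 j b m ->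
  (Rt i a l : Mod nn) = Rt j b m.
Proof.
rewrite /pv => hab; rewrite hab => /gcanl /Pm_injl -> /gcanr /Pm_injr -> //.
Qed.

Definition termOf nn (c : gen nn.+2 * bool) : Fcss nn.+2 :=
  let h := match c.1 with inl i => uT i | inr (l, i) => Mul (CT l) (DT i) end in
  if c.2 then h else Inv h.

Definition goodg nn (g : gen nn.+2) : bool :=
  if g is inr (l, i) then (l != ord0) && (i != ord0) else true.

Lemma interp_termOf nn (c : gen nn.+2 * bool) : goodg c.1 ->
  interp (termOf c) = Rt ord0 (sing c : FGN nn.+2) ord0.
Proof.
case: c => g b /= hg.
have Hh : interp (match g with inl i => uT i | inr (l, i) => Mul (CT l) (DT i) end)
          = Rt ord0 (sing (g, true) : FGN nn.+2) ord0.
  case: g hg => [i|[l i]] /= hg.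
  - exact: cuM.
  - rewrite (_ : interp (Mul (CT l) (DT i)) = cC (@Xg nn) l ** cD (@Xg nn) i) //.
    rewrite cCM cDM mulM g1m gm1 /Pm.
    by case/andP: hg => /negbTE -> /negbTE ->.
rewrite /termOf /=; case: b.
- exact: Hh.
- rewrite (_ : interp (Inv _) = ci (interp (match g with inl i => uT i | inr (l, i) => Mul (CT l) (DT i) end))) // Hh H00inv.
  congr Rt; exact: val_inj.
Qed.

Definition cands nn : seq (gen nn.+2 * bool) :=
  [:: (inl ord0, true); (inl ord0, false); (inl (o1 nn), true); (inl (o1 nn), false);
      (inr (o1 nn, o1 nn), true); (inr (o1 nn, o1 nn), false)].

Lemma cands_good nn : all (fun c : gen nn.+2 * bool => goodg c.1) (cands nn).
Proof. exact: isT. Qed.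
Lemma cands_uniq nn : uniq (cands nn).
Proof. exact: isT. Qed.

Lemma pick_cand nn (l4 : seq (gen nn.+2 * bool)) : size l4 <= 4 ->
  exists c, c \in cands nn /\ c \notin l4.
Proof.
move=> hs; case: (boolP (all (fun c => c \in l4) (cands nn))) => [/allP hall|].
- have := uniq_leq_size (cands_uniq nn) hall.
  by move=> h; have := leq_trans h hs.
- rewrite -has_predC => /hasP [c hc hnc]; by exists c.
Qed.

Lemma pick_k nn (m m' : Mod nn) : m <> m' ->
  exists k, exists i a l j b q, m = Rt i a l /\ m' = Rt j b q /\ pv k i a l <> pv k j b q.
Proof.
case: m => i a l; case: m' => j b q hne.
case: (classic (pv 0 i a l = pv 0 j b q)) => h0; last by exists 0, i, a, l, j, b, q.
case: (classic (pv 1 i a l = pv 1 j b q)) => h1; last by exists 1, i, a, l, j, b, q.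
case: (classic (pv 2 i a l = pv 2 j b q)) => h2; last by exists 2, i, a, l, j, b, q.
by case: hne; apply: pv_inj.
Qed.

Lemma fg_ne1 nn (x y : FGN nn.+2) : x <> y -> val (x *g gi y) != [::].
Proof.
move=> hne; apply/eqP => h; apply: hne.
have e1 : x *g gi y = g1 by apply: val_inj.
by apply: (@gcanr _ (gi y)); rewrite e1 gmV.
Qed.

Lemma sep nn (a b c d : Fcss nn.+2) : ~ css_eq a b -> ~ css_eq c d ->
  exists k l Gt, ~ css_eq (gadG (fun t => t) k l Gt a b c d).1 (gadG (fun t => t) k l Gt a b c d).2.
Proof.
move=> nab ncd.
have hab : interp a <> interp b by move=> h; apply: nab; apply: complete.
have hcd : interp c <> interp d by move=> h; apply: ncd; apply: complete.
have [k [i1 [a1 [l1 [i2 [a2 [l2 [ea [eb hk]]]]]]]]] := pick_k hab.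
have [l [j1 [c1 [m1 [j2 [c2 [m2 [ec [ed hl]]]]]]]]] := pick_k hcd.
set xi := pv k i1 a1 l1 *g gi (pv k i2 a2 l2).
set eta := pv l j1 c1 m1 *g gi (pv l j2 c2 m2).
have nxi : val xi != [::] by exact: fg_ne1.
have neta : val eta != [::] by exact: fg_ne1.
pose d0 : gen nn.+2 * bool := (inl ord0, true).
have [cc [hcc hnc]] := @pick_cand nn [:: head d0 (val xi); flipl (last d0 (val xi));
   flipl (head d0 (val eta)); last d0 (val eta)] isT.
exists k, l, (termOf cc) => /soundM.
have := eval_gad (@Xg nn) k l (termOf cc) a b c d.
rewrite -/(interp _) -/(interp _).
rewrite -/(interp a) -/(interp b) -/(interp c) -/(interp d) -/(interp (termOf cc)).
rewrite interp_termOf; last exact: (allP (cands_good nn)).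
rewrite ea eb ec ed /gadS !projM ceM.
rewrite !(H00mul, H00inv) !g1m !gm1.
move: hnc; rewrite !inE => /norP [h1 /norP [h2 /norP [h3 h4]]].
have NC := @noncomm _ xi eta cc d0 nxi neta h1 h2 h3 h4.
case=> -> -> E; apply: NC; case: E => E.
apply: val_inj; exact: E.
Qed.

Definition gadLS nn m (k l : nat) (Gt : Fcss nn.+2) (e1 e2 : equation nn.+2 m) : equation nn.+2 m :=
  gadG (fun t => Var (inr t)) k l Gt e1.1 e1.2 e2.1 e2.2.

Lemma LS_eval_gad nn m (p : 'I_m -> Fcss nn.+2) k l Gt (e1 e2 : equation nn.+2 m) :
  LS_eval p (gadLS k l Gt e1 e2).1 =
    (gadG (fun t => t) k l Gt (LS_eval p e1.1) (LS_eval p e1.2) (LS_eval p e2.1) (LS_eval p e2.2)).1 /\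
  LS_eval p (gadLS k l Gt e1 e2).2 =
    (gadG (fun t => t) k l Gt (LS_eval p e1.1) (LS_eval p e1.2) (LS_eval p e2.1) (LS_eval p e2.2)).2.
Proof. by case: k => [|[|k]]; case: l => [|[|l]]. Qed.

Definition unionSys nn m (E1 E2 : system nn.+2 m) : system nn.+2 m :=
  fun e => exists e1 e2 k l Gt, E1 e1 /\ E2 e2 /\ e = gadLS k l Gt e1 e2.

Lemma not_sol nn m (E : system nn.+2 m) p : ~ solution E p ->
  exists e, E e /\ ~ css_eq (LS_eval p e.1) (LS_eval p e.2).
Proof.
move=> h; apply: NNPP => h2; apply: h => e he; apply: NNPP => h3.
by apply: h2; exists e.
Qed.

Lemma union_alg nn m (A B : ('I_m -> Fcss nn.+2) -> Prop) :
  algebraic A -> algebraic B -> algebraic (fun p => A p \/ B p).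
Proof.
case=> E1 h1 [E2 h2]; exists (unionSys E1 E2) => p; split.
- case=> [/h1 s1 | /h2 s2] e [e1 [e2 [k [l [Gt [he1 [he2 ->]]]]]]];
    have [-> ->] := LS_eval_gad p k l Gt e1 e2.
  + exact: gadT_left (s1 _ he1).
  + exact: gadT_right (s2 _ he2).
- move=> hs; rewrite h1 h2.
  case: (classic (solution E1 p)) => [|n1]; first by left.
  case: (classic (solution E2 p)) => [|n2]; first by right.
  exfalso.
  have [e1 [he1 ne1]] := not_sol n1.
  have [e2 [he2 ne2]] := not_sol n2.
  have [k [l [Gt hne]]] := sep ne1 ne2.
  have := hs (gadLS k l Gt e1 e2) (ex_intro _ e1 (ex_intro _ e2 (ex_intro _ k (ex_intro _ l (ex_intro _ Gt (conj he1 (conj he2 erefl))))))).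
  by have [-> ->] := LS_eval_gad p k l Gt e1 e2.
Qed.

Lemma alg_ext nn m (A B : ('I_m -> Fcss nn.+2) -> Prop) :
  (forall p, A p <-> B p) -> algebraic A -> algebraic B.
Proof. move=> hAB [E hE]; exists E => p; rewrite -hE; split; apply hAB. Qed.

Lemma empty_alg nn m : algebraic (fun p : 'I_m -> Fcss nn.+2 => False).
Proof.
exists (fun e => e = (Var (inr (Var ord0)), Var (inr (Var (o1 nn))))) => p; split => // hs.
have /soundM := hs _ erefl; rewrite /= /interp /= /Xg => -[].
by move=> h; discriminate h.
Qed.

Theorem mainTheorem8 (n : nat) : 2 <= n -> equational_domain n.
Proof.
case: n => [|[|nn]] // _ m k.
elim: k => [|k IH] Es.
- apply: alg_ext (empty_alg nn m) => p; split => //; by case=> -[].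
- apply: alg_ext (union_alg (IH (fun j => Es (widen_ord (leqnSn k) j))) (ex_intro _ (Es ord_max) (fun p => iff_refl _))) => p.
  split.
  + case=> [[j hj] | hj]; [by exists (widen_ord (leqnSn k) j) | by exists ord_max].
  + case=> j hj; case: (ltnP j k) => hjk.
    * left; exists (Ordinal hjk); congr (solution (Es _) p): hj; exact: val_inj.
    * right; congr (solution (Es _) p): hj; apply: val_inj => /=.
      by apply/eqP; rewrite eqn_leq hjk -ltnS ltn_ord.
Qed.
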